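(* Let $G=(U\sqcup V,E)$ be a bipartite graph with integer weights $w:E\to\mathbb{Z}$ having a perfect matching, and let $n=|U|=|V|$. Let $0<\epsilon\le 1/(n+1)$, let $M$ be a perfect matching of $G$ and let $\pi_\epsilon:U\to\mathbb{R}$, $p_\epsilon:V\to\mathbb{R}$ satisfy $\pi_\epsilon(u)+p_\epsilon(v)\le w(uv)+\epsilon$ for all $uv\in E$ and $\pi_\epsilon(u)+p_\epsilon(v)=w(uv)$ for all $uv\in M$. Let $t\in\{0,1,\ldots,n\}$ be any integer such that \[ t\neq \big\lceil (n+1)(\lceil p_\epsilon(v)\rceil-p_\epsilon(v))\big\rceil \bmod (n+1)\quad\text{for all } v\in V \] (such $t$ exists). Define $p(v)=\lfloor p_\epsilon(v)+t/(n+1)\rfloor$ for all $v\in V$ and $\pi(u)=w(uv)-p(v)$ for each $uv\in M$. Then $P=(\pi,p)$ is an optimal solution of the dual assignment program \[ \max \sum_{u\in U}\pi(u)+\sum_{v\in V}p(v)\quad\text{subject to}\quad \pi(u)+p(v)\le w(uv)\ \ \forall uv\in E . \]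
   Context: A matching is a set of pairwise vertex-disjoint edges; it is perfect if it covers all vertices. The dual assignment program above is the linear-programming dual of the assignment (minimum weight perfect matching) linear program $\min\sum_{uv\in E}x(uv)w(uv)$ subject to $\sum_{v:uv\in E}x(uv)=1$ for all $u\in U$, $\sum_{u:uv\in E}x(uv)=1$ for all $v\in V$, $x\ge0$. *)

(* Defs.v *)
From HB Require Import structures.
From mathcomp Require Import all_boot all_order all_algebra.
Set Implicit Arguments. Unset Strict Implicit. Unset Printing Implicit Defensive.
Import Order.TTheory GRing.Theory Num.Theory.
Local Open Scope ring_scope.

(* A bipartite graph G = (U ⊔ V, E): U, V finite types, E : {set U * V}
   the edge set (edge uv is the pair (u, v)). *)

Definition is_perfect_matching (U V : finType) (E M : {set U * V}) : Prop :=
  [/\ M \subset E,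
      (forall u, exists v, (u, v) \in M),
      (forall v, exists u, (u, v) \in M),
      (forall u v v', (u, v) \in M -> (u, v') \in M -> v = v') &
      (forall u u' v, (u, v) \in M -> (u', v) \in M -> u = u')].

Definition has_perfect_matching (U V : finType) (E : {set U * V}) : Prop :=
  exists M, is_perfect_matching E M.

Definition dual_feasible (R : numDomainType) (U V : finType) (E : {set U * V})
    (w : U -> V -> int) (pi : U -> R) (p : V -> R) : Prop :=
  forall u v, (u, v) \in E -> pi u + p v <= (w u v)%:~R.

Definition dual_value (R : numDomainType) (U V : finType)
    (pi : U -> R) (p : V -> R) : R :=
  \sum_(u : U) pi u + \sum_(v : V) p v.

Definition dual_optimal (R : numDomainType) (U V : finType) (E : {set U * V})
    (w : U -> V -> int) (pi : U -> R) (p : V -> R) : Prop :=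
  dual_feasible E w pi p /\
  forall (pi' : U -> R) (p' : V -> R), dual_feasible E w pi' p' ->
    dual_value pi' p' <= dual_value pi p.

(* Main.v *)
Require Import Defs.
From HB Require Import structures.
From mathcomp Require Import all_boot all_order all_algebra.
From mathcomp Require Import zify ring lra.
Import Order.TTheory GRing.Theory Num.Theory.
Local Open Scope ring_scope.

Lemma int_between0 (R : archiRealFieldType) (z : int) :
  -1 < (z%:~R : R) -> (z%:~R : R) < 1 -> z = 0.
Proof.
move=> h1 h2.
have a : (-1 < z)%R by rewrite -(ltr_int R) intrN.
have b : (z < 1)%R by rewrite -(ltr_int R).
lia.
Qed.

Lemma lin_aux (R : realFieldType) (A B C D F : R) : D - 1 < A - C -> A - C <= D ->
  C + F < B + 1 -> B <= C + F -> -1 < A - B + F - D /\ A - B + F - D < 1.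
Proof. move=> *; split; lra. Qed.

Lemma frac_ge (R : archiRealFieldType) (n t : nat) (x : R) :
  (t <= n)%N ->
  (t%:Z != (Num.ceil ((n.+1)%:R * ((Num.ceil x)%:~R - x)) %% (n.+1)%:Z)%Z) ->
  1 / (n.+1)%:R <= x + t%:R / (n.+1)%:R - (Num.floor (x + t%:R / (n.+1)%:R))%:~R.
Proof.
move=> htn hg.
set N : R := (n.+1)%:R.
have N0 : 0 < N by rewrite /N ltr0n.
set c := Num.ceil x.
set k := Num.ceil (N * (c%:~R - x)).
set m := Num.floor (x + t%:R / N).
have /andP[k1 k2] := ceil_itv (N * (c%:~R - x)).
have /andP[m1 m2] := floor_itv (x + t%:R / N).
rewrite -/k in k1 k2; rewrite -/m in m1 m2.
rewrite ler_pdivrMr // mulrBl mulrDl mulfVK; last by rewrite gt_eqF.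
rewrite lerBrDl.
rewrite real_leNgt ?num_real //; apply/negP => hlt.
move: hg => /negP; apply.
have hm1 : m%:~R * N <= x * N + t%:R.
  have := m1; rewrite -(ler_pM2r N0) mulrDl mulfVK ?gt_eqF //.
have k1' : k%:~R - 1 < N * c%:~R - N * x by rewrite -mulrBr; rewrite intrB in k1.
have k2' : N * c%:~R - N * x <= k%:~R by rewrite -mulrBr.
rewrite (mulrC x N) (mulrC (m%:~R) N) in hlt hm1.
pose j := c - m.
have e : (n.+1%:Z * j + t%:Z - k = 0)%R.
  have [h1 h2] := @lin_aux R _ _ _ _ _ k1' k2' hlt hm1.
  apply: (@int_between0 R);
    rewrite !(intrD, intrB, intrM, intrN) /= -/N;
    have -> : ((n.+1)%:Z%:~R : R) = N by [];
    have -> : ((t%:Z)%:~R : R) = t%:R by [];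
    by rewrite /j ?intrB ?intrN mulrBr.
rewrite -/N -/c -/k.
have -> : k = j * n.+1%:Z + t%:Z by rewrite -[k]addr0 -e; ring.
apply/eqP; rewrite modzMDl modz_small //; apply/andP; split => //.
Qed.

Lemma aux2 (R : realFieldType) (d a s P b Q c W eps W' : R) :
  d <= a + s - P -> b + s < Q + 1 -> c + a <= W + eps -> c + b = W' -> eps <= d ->
  W' - Q + P < W + 1.
Proof. move=> *; lra. Qed.

Theorem proposition2p8 (R : archiRealFieldType) (U V : finType)
    (E : {set U * V}) (w : U -> V -> int)
    (hasPM : has_perfect_matching E)
    (n : nat) (hnU : #|U| = n) (hnV : #|V| = n)
    (eps : R) (heps0 : 0 < eps) (heps1 : eps <= 1 / (n.+1)%:R)
    (M : {set U * V}) (hM : is_perfect_matching E M)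
    (pi_e : U -> R) (p_e : V -> R)
    (hfeas : forall u v, (u, v) \in E -> pi_e u + p_e v <= (w u v)%:~R + eps)
    (htight : forall u v, (u, v) \in M -> pi_e u + p_e v = (w u v)%:~R) :
  let good (t : nat) : Prop :=
    forall v : V,
      (t%:Z != (Num.ceil ((n.+1)%:R * ((Num.ceil (p_e v))%:~R - p_e v))
                  %% (n.+1)%:Z)%Z) in
  (exists t : nat, (t <= n)%N /\ good t) /\
  (forall t : nat, (t <= n)%N -> good t ->
     let p : V -> int := fun v => Num.floor (p_e v + t%:R / (n.+1)%:R) in
     forall pi : U -> int,
       (forall u v, (u, v) \in M -> pi u = w u v - p v) ->
       dual_optimal E w (fun u => (pi u)%:~R : R) (fun v => (p v)%:~R : R)).
Proof.
move=> good; split.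
  pose h v := (Num.ceil ((n.+1)%:R * ((Num.ceil (p_e v))%:~R - p_e v)) %% (n.+1)%:Z)%Z.
  pose g v : 'I_n.+1 := inord (absz (h v)).
  have : ~~ ([set: 'I_n.+1] \subset g @: [set: V]).
    apply/negP => /subset_leq_card; rewrite cardsT card_ord.
    move/leq_trans => /(_ _ (leq_imset_card _ _)); rewrite cardsT hnV ltnn //.
  case/subsetPn => t _ ht; exists t; split; first by rewrite -ltnS.
  move=> v; apply/negP => /eqP htv; move: ht; apply/negP; rewrite negbK.
  apply/imsetP; exists v => //; apply/val_inj; rewrite /g /h -htv /= inordK //.
move=> t htn hgood p pi hpi.
case: hM => hME hcu hcv hinjv hinju.
pose f u := xchoose (hcu u).
have hf u : (u, f u) \in M := xchooseP (hcu u).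
pose g v := xchoose (hcv v).
have hg v : (g v, v) \in M := xchooseP (hcv v).
have fK : cancel f g by move=> u; exact: (hinju _ _ _ (hg (f u)) (hf u)).
have gK : cancel g f by move=> v; exact: (hinjv _ _ _ (hf (g v)) (hg v)).
have hpif u : pi u = w u (f u) - p (f u) by exact: hpi.
have feas : dual_feasible E w (fun u => (pi u)%:~R : R) (fun v => (p v)%:~R : R).
  move=> u v huv /=.
  have hfr := @frac_ge R n t _ htn (hgood v).
  have hfr' := @frac_ge R n t _ htn (hgood (f u)).
  rewrite -/p in hfr hfr'.
  have /andP[_ q2] := floor_itv (p_e (f u) + t%:R / (n.+1)%:R).
  rewrite -/(p (f u)) intrD in q2.
  have e1 := hfeas _ _ huv.
  have e2 := htight _ _ (hf u).
  suff : (pi u + p v < w u v + 1)%R.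
    by rewrite ltzD1 -(ler_int R) intrD.
  rewrite -(ltr_int R) !intrD hpif intrB.
  rewrite (_ : (1%:~R : R) = 1) // in q2 *.
  exact: (@aux2 R _ _ _ _ _ _ _ _ _ _ hfr q2 e1 e2 heps1).
split => // pi' p' hfe.
rewrite /dual_value (reindex f) /=; last by apply: onW_bij; exists g.
rewrite (reindex f (P := predT) (F := fun v => (p v)%:~R : R)) /=; last by apply: onW_bij; exists g.
rewrite -!big_split /=; apply: ler_sum => u _.
rewrite hpif intrB subrK.
exact: hfe _ _ (subsetP hME _ (hf u)).
Qed.
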